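(* For any fixed $k\ge 3$, as $t\to\infty$, $$\Pr\big(|Z_k(t) - \mathbb{E}[Z_k(t)]| \geq \sqrt{t\log t}\big) = o(1),$$ where $Z_k(t)$ is the number of vertices of degree $k$ in a Random Apollonian Network after $t$ steps.
   Context: A Random Apollonian Network (RAN) is generated as follows: start (at time $t=0$) with a single triangular face. At each step $t=1,2,\dots$, pick one of the current (bounded) triangular faces uniformly at random, insert a new vertex inside it, and connect it to the three vertices on the boundary of that face, subdividing the face into three new triangular faces. $Z_k(t)$ denotes the number of vertices of degree exactly $k$ after $t$ steps. *)

(* Defs.v *)
From HB Require Import structures.
From mathcomp Require Import all_boot all_order all_algebra.
From mathcomp Require Import all_classical all_reals all_analysis.
Set Implicit Arguments. Unset Strict Implicit. Unset Printing Implicit Defensive.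
Import Order.TTheory GRing.Theory Num.Theory.

(* Random Apollonian Network, encoded by the sequence of uniform choices.
   Vertices are labelled by nat: the initial triangle is 0,1,2; the vertex
   inserted at step n+1 (n = number of steps already done) is n+3.
   A state is (list of current bounded triangular faces, list of edges). *)

Definition ran_state := (seq (nat * nat * nat) * seq (nat * nat))%type.

Definition ran_init : ran_state := ([:: (0, 1, 2)], [:: (0, 1); (1, 2); (0, 2)]).

Definition ran_step (n : nat) (st : ran_state) (i : nat) : ran_state :=
  let v := (n + 3)%N in
  let '(a, b, c) := nth (0, 1, 2) st.1 i in
  (take i st.1 ++ drop i.+1 st.1 ++ [:: (a, b, v); (b, c, v); (a, c, v)],
   [:: (a, v); (b, v); (c, v)] ++ st.2).

Fixpoint ran_build_aux (n : nat) (cs : seq nat) (st : ran_state) : ran_state :=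
  match cs with
  | [::] => st
  | i :: cs' => ran_build_aux n.+1 cs' (ran_step n st i)
  end.

Definition ran_build (cs : seq nat) : ran_state := ran_build_aux 0 cs ran_init.

(* All admissible choice sequences of length t: before step n+1 there are
   2n+1 faces, and the choice at that step is an index in [0, 2n]. Each
   sequence has probability 1 / (1*3*5*...*(2t-1)): the uniform choices. *)
Fixpoint ran_choices (t : nat) : seq (seq nat) :=
  match t with
  | 0 => [:: [::]]
  | t'.+1 => [seq rcons c i | c <- ran_choices t', i <- iota 0 (2 * t').+1]
  end.

Definition ran_degree (E : seq (nat * nat)) (u : nat) : nat :=
  count (fun e => (e.1 == u) || (e.2 == u)) E.

Definition ranZ (k : nat) (cs : seq nat) : nat :=
  count (fun u => ran_degree (ran_build cs).2 u == k) (iota 0 (size cs + 3)).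

Local Open Scope ring_scope.

Definition ran_prob (R : realType) (t : nat) (P : seq nat -> bool) : R :=
  (count P (ran_choices t))%:R / (size (ran_choices t))%:R.

Definition ran_expect (R : realType) (t : nat) (X : seq nat -> nat) : R :=
  (\sum_(c <- ran_choices t) (X c)%:R) / (size (ran_choices t))%:R.

(* Main.v *)
Require Import Defs.
From HB Require Import structures.
From mathcomp Require Import all_boot all_order all_algebra.
From mathcomp Require Import all_classical all_reals all_analysis.
From mathcomp Require Import zify ring lra.
Import Order.TTheory GRing.Theory Num.Theory numFieldNormedType.Exports.
Set Implicit Arguments. Unset Strict Implicit. Unset Printing Implicit Defensive.

Fixpoint fut (n r : nat) : seq (seq nat) :=
  match r with
  | 0 => [:: [::]]
  | r'.+1 => [seq i :: c | i <- iota 0 (2 * n).+1, c <- fut n.+1 r']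
  end.

Lemma allpairs_assoc_aux (I : seq nat) (F : seq (seq nat)) (J : seq nat) :
  [seq i :: c | i <- I, c <- [seq rcons c' j | c' <- F, j <- J]] =
  [seq rcons c j | c <- [seq i :: c' | i <- I, c' <- F], j <- J].
Proof.
elim: I => [|i I IH] //=.
rewrite allpairs_cat -IH; congr (_ ++ _).
by rewrite allpairs_mapl map_allpairs.
Qed.

Lemma fut_rcons n r :
  fut n r.+1 = [seq rcons c i | c <- fut n r, i <- iota 0 (2 * (n + r)).+1].
Proof.
elim: r n => [|r IH] n.
  by rewrite /= addn0 allpairs1r cats0 /=.
transitivity [seq i :: c | i <- iota 0 (2*n).+1, c <- fut n.+1 r.+1]; first by [].
by rewrite IH allpairs_assoc_aux addSnnS.
Qed.

Lemma ran_choices_fut t : ran_choices t = fut 0 t.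
Proof.
elim: t => [|t IH] //.
by rewrite fut_rcons /= IH.
Qed.

Lemma rem_perm (T : eqType) (x : T) s1 s2 :
  perm_eq s1 s2 -> perm_eq (rem x s1) (rem x s2).
Proof.
move=> p; case: (boolP (x \in s1)) => h.
  have h2 : x \in s2 by rewrite -(perm_mem p).
  have := perm_to_rem h; have := perm_to_rem h2.
  move=> q2 q1.
  rewrite -(perm_cons x); apply: (perm_trans (perm_trans _ p) q2).
  by rewrite perm_sym.
have h2 : x \notin s2 by rewrite -(perm_mem p).
by rewrite !rem_id.
Qed.

Definition zT (k T : nat) (E : seq (nat * nat)) : nat :=
  count (fun u => ran_degree E u == k) (iota 0 (T + 3)).

Definition G (k T r n : nat) (st : ran_state) : nat :=
  \sum_(c <- fut n r) zT k T (ran_build_aux n c st).2.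

Lemma G_S k T r n st :
  G k T r.+1 n st = \sum_(i <- iota 0 (2 * n).+1) G k T r n.+1 (ran_step n st i).
Proof.
rewrite /G -[fut n r.+1]/([seq i :: c | i <- iota 0 (2*n).+1, c <- fut n.+1 r]).
by rewrite big_allpairs_dep.
Qed.

Lemma G_0 k T n st : G k T 0 n st = zT k T st.2.
Proof. by rewrite /G big_cons big_nil addn0. Qed.

Lemma size_fut_S n r : size (fut n r.+1) = (2 * n).+1 * size (fut n.+1 r).
Proof.
rewrite -[fut n r.+1]/([seq i :: c | i <- iota 0 (2*n).+1, c <- fut n.+1 r]).
by rewrite size_allpairs size_iota.
Qed.

Lemma size_fut_gt0 n r : 0 < size (fut n r).
Proof. by elim: r n => [|r IH] n //; rewrite size_fut_S muln_gt0 IH. Qed.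

Lemma sum_iota_const m c : \sum_(i <- iota 0 m) c = m * c.
Proof. by rewrite -{1}(subn0 m) -/(index_iota 0 m) sum_nat_const_nat subn0. Qed.

Definition newF (f : nat * nat * nat) (v : nat) : seq (nat * nat * nat) :=
  [:: (f.1.1, f.1.2, v); (f.1.2, f.2, v); (f.1.1, f.2, v)].
Definition newE (f : nat * nat * nat) (v : nat) : seq (nat * nat) :=
  [:: (f.1.1, v); (f.1.2, v); (f.2, v)].

Lemma step_eq n L E i :
  ran_step n (L, E) i =
  (take i L ++ drop i.+1 L ++ newF (nth (0, 1, 2) L i) (n + 3),
   newE (nth (0, 1, 2) L i) (n + 3) ++ E).
Proof. by rewrite /ran_step /=; case: (nth _ _ _) => [[a b] c]. Qed.

Lemma del_perm (T : eqType) (x0 : T) (L : seq T) i : i < size L ->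
  perm_eq (take i L ++ drop i.+1 L) (rem (nth x0 L i) L).
Proof.
move=> hi; have hx : nth x0 L i \in L by apply: mem_nth.
rewrite -(perm_cons (nth x0 L i)); apply: perm_trans (perm_to_rem hx).
have eL : L = take i L ++ nth x0 L i :: drop i.+1 L.
  by rewrite -drop_nth // cat_take_drop.
apply: (@perm_trans _ (take i L ++ nth x0 L i :: drop i.+1 L)); last by rewrite -eL.
by rewrite -cat1s perm_catCA.
Qed.

Lemma G_perm k T r : forall n L L' E, perm_eq L L' -> size L = (2 * n).+1 ->
  G k T r n (L, E) = G k T r n (L', E).
Proof.
elim: r => [|r IH] n L L' E hp hs; first by rewrite !G_0.
have hs' : size L' = (2 * n).+1 by rewrite -(perm_size hp).
pose H (M : seq (nat * nat * nat)) x :=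
  G k T r n.+1 (rem x M ++ newF x (n + 3), newE x (n + 3) ++ E).
have key : forall M, size M = (2 * n).+1 ->
   \sum_(i <- iota 0 (2 * n).+1) G k T r n.+1 (ran_step n (M, E) i)
   = \sum_(x <- M) H M x.
  move=> M hM.
  rewrite (big_nth (0, 1, 2)) /index_iota subn0 hM.
  rewrite big_seq [RHS]big_seq; apply: eq_bigr => i; rewrite mem_iota /= => hi.
  rewrite step_eq /H; apply: IH; last first.
    by rewrite !size_cat size_take size_drop hM hi /=; lia.
  by rewrite catA perm_cat2r; apply: del_perm; rewrite hM.
rewrite !G_S (key _ hs) (key _ hs').
rewrite (perm_big _ hp) /=.
apply: eq_big_seq => x hx; rewrite /H; apply: IH.
  by rewrite perm_cat2r; apply: rem_perm.
rewrite size_cat size_rem ?hs ?(perm_mem hp) //=; lia.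
Qed.


Definition pos_rel (S : seq nat) (a b : nat) := (a == b) || ((a \in S) && (b \in S)).
Definition face_rel (S : seq nat) (f g : nat * nat * nat) :=
  [&& pos_rel S f.1.1 g.1.1, pos_rel S f.1.2 g.1.2 & pos_rel S f.2 g.2].

Lemma pos_rel_refl S a : pos_rel S a a.
Proof. by rewrite /pos_rel eqxx. Qed.

Lemma face_rel_refl S f : face_rel S f f.
Proof. by rewrite /face_rel !pos_rel_refl. Qed.

Lemma pos_rel_sym S a b : pos_rel S a b -> pos_rel S b a.
Proof. by rewrite /pos_rel eq_sym => /orP[->//|/andP[-> ->]]; rewrite orbT. Qed.

Lemma face_rel_sym S f g : face_rel S f g -> face_rel S g f.
Proof.
case/and3P=> h1 h2 h3; apply/and3P; split; by apply: pos_rel_sym.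
Qed.

Lemma all2_sym (A : Type) (r : A -> A -> bool) s t :
  (forall x y, r x y -> r y x) -> all2 r s t -> all2 r t s.
Proof.
move=> hr; elim: s t => [|x s IH] [|y t] //= /andP[h1 h2].
by rewrite hr // IH.
Qed.

Lemma all2_take (A : Type) (r : A -> A -> bool) i s t :
  all2 r s t -> all2 r (take i s) (take i t).
Proof.
elim: s t i => [|x s IH] [|y t] i //=.
move/andP=> [h1 h2]; case: i => [//|i] /=.
by rewrite h1 IH.
Qed.

Lemma all2_drop (A : Type) (r : A -> A -> bool) i s t :
  all2 r s t -> all2 r (drop i s) (drop i t).
Proof.
elim: s t i => [|x s IH] [|y t] i //=.
move/andP=> [h1 h2]; case: i => [|i] /=; first by rewrite h1 h2.
by apply: IH.
Qed.

Lemma all2_nth (A : Type) (r : A -> A -> bool) x0 i s t :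
  r x0 x0 -> all2 r s t -> r (nth x0 s i) (nth x0 t i).
Proof.
move=> h0; elim: s t i => [|x s IH] [|y t] i //=; first by rewrite !nth_nil.
move/andP=> [h1 h2]; case: i => [//|i] /=.
by apply: IH.
Qed.

Lemma all2_cat (A : Type) (r : A -> A -> bool) s1 s2 t1 t2 :
  all2 r s1 t1 -> all2 r s2 t2 -> all2 r (s1 ++ s2) (t1 ++ t2).
Proof.
elim: s1 t1 => [|x s IH] [|y t] //= /andP[h1 h2] h.
by rewrite h1 IH.
Qed.

Lemma pos_rel_eq S a b u : pos_rel S a b -> u \notin S -> (a == u) = (b == u).
Proof.
case/orP=> [/eqP -> //|/andP[ha hb]] hu.
have -> : (a == u) = false by apply/negbTE; apply: contraNneq hu => <-.
have -> : (b == u) = false by apply/negbTE; apply: contraNneq hu => <-.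
by [].
Qed.

Lemma deg_cat E1 E2 u : ran_degree (E1 ++ E2) u = ran_degree E1 u + ran_degree E2 u.
Proof. by rewrite /ran_degree count_cat. Qed.

Lemma deg_newE S f g v u : face_rel S f g -> u \notin S ->
  ran_degree (newE f v) u = ran_degree (newE g v) u.
Proof.
case/and3P=> h1 h2 h3 hu.
by rewrite /ran_degree /newE /= (pos_rel_eq h1 hu) (pos_rel_eq h2 hu) (pos_rel_eq h3 hu).
Qed.

Lemma face_rel_newF S f g v : face_rel S f g -> all2 (face_rel S) (newF f v) (newF g v).
Proof.
case/and3P=> h1 h2 h3.
by rewrite /= /face_rel /= h1 h2 h3 /pos_rel !eqxx.
Qed.


Lemma count_le_add (T : Type) (a b c : pred T) s :
  (forall x, a x -> b x || c x) -> count a s <= count b s + count c s.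
Proof.
move=> h; elim: s => [|x s IH] //=.
case ha: (a x); last by lia.
have := h x ha; case: (b x); case: (c x) => //= _; lia.
Qed.

Lemma zT_le k T S EA EB :
  (forall u, u \notin S -> ran_degree EA u = ran_degree EB u) ->
  zT k T EA <= zT k T EB + size S.
Proof.
move=> hd; rewrite /zT.
apply: leq_trans (count_le_add (b := fun u => ran_degree EB u == k) (c := mem S) _ _) _.
  move=> u h; case: (boolP (u \in S)) => hu; first by apply/orP; right.
  by rewrite -(hd u hu) h.
rewrite leq_add2l -size_filter; apply: uniq_leq_size.
  by apply: filter_uniq; apply: iota_uniq.
by move=> u; rewrite mem_filter => /andP[].
Qed.

Lemma couple k T (S : seq nat) r : forall n (LA : seq (nat*nat*nat)) (EA : seq (nat*nat)) LB EB, all2 (face_rel S) LA LB ->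
  (forall u, u \notin S -> ran_degree EA u = ran_degree EB u) ->
  G k T r n (LA, EA) <= G k T r n (LB, EB) + size S * size (fut n r).
Proof.
elim: r => [|r IH] n LA EA LB EB ha hd.
  by rewrite !G_0 /= muln1; apply: zT_le.
rewrite !G_S size_fut_S mulnCA -(sum_iota_const (2 * n).+1) -big_split /=.
apply: leq_sum => i _; rewrite !step_eq; apply: IH.
  rewrite catA catA; apply: all2_cat.
    by apply: all2_cat; [apply: all2_take | apply: all2_drop].
  by apply: face_rel_newF; apply: all2_nth => //; apply: face_rel_refl.
move=> u hu; rewrite !deg_cat (hd u hu); congr (_ + _).
by apply: deg_newE hu; apply: all2_nth => //; apply: face_rel_refl.
Qed.

Lemma all2_refl (A : Type) (r : A -> A -> bool) s : (forall x, r x x) -> all2 r s s.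
Proof. by move=> h; elim: s => //= x s ->; rewrite h. Qed.

Definition corners (Fa Fb : nat * nat * nat) : seq nat :=
  [:: Fa.1.1; Fa.1.2; Fa.2; Fb.1.1; Fb.1.2; Fb.2].

Lemma corners_rel Fa Fb : face_rel (corners Fa Fb) Fa Fb.
Proof. by rewrite /face_rel /pos_rel /corners !inE !eqxx !orbT. Qed.

Lemma corners_rel' Fa Fb : face_rel (corners Fa Fb) Fb Fa.
Proof. by rewrite /face_rel /pos_rel /corners !inE !eqxx !orbT. Qed.

Lemma first_couple k T r n (L : seq (nat * nat * nat)) E a b :
  size L = (2 * n).+1 -> a < size L -> b < size L ->
  G k T r n.+1 (ran_step n (L, E) a) <=
  G k T r n.+1 (ran_step n (L, E) b) + 6 * size (fut n.+1 r).
Proof.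
move=> hs ha hb; rewrite !step_eq.
set Fa := nth _ L a; set Fb := nth _ L b; set v := n + 3.
have hFa : Fa \in L by apply: mem_nth.
have hFb : Fb \in L by apply: mem_nth.
have hsz : forall i, i < size L ->
  size (take i L ++ drop i.+1 L ++ newF (nth (0, 1, 2) L i) v) = (2 * n.+1).+1.
  by move=> i hi; rewrite !size_cat size_take size_drop hi /= hs; lia.
have hpr : forall i, i < size L ->
  perm_eq (take i L ++ drop i.+1 L ++ newF (nth (0, 1, 2) L i) v)
          (rem (nth (0, 1, 2) L i) L ++ newF (nth (0, 1, 2) L i) v).
  by move=> i hi; rewrite catA perm_cat2r; apply: del_perm.
rewrite (G_perm _ _ _ _ (hpr a ha) (hsz a ha)).
rewrite (G_perm _ _ _ _ (hpr b hb) (hsz b hb)).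
rewrite -/Fa -/Fb.
have pA : perm_eq L (Fa :: rem Fa L) by apply: perm_to_rem.
have hszr : forall F, F \in L -> size (rem F L ++ newF F v) = (2 * n.+1).+1.
  by move=> F hF; rewrite size_cat size_rem // hs /=; lia.
case: (eqVneq Fa Fb) => [<-|hne]; first by apply: leq_addr.
have hFb' : Fb \in rem Fa L.
  by move: hFb; rewrite (perm_mem pA) inE eq_sym (negbTE hne).
set M := rem Fb (rem Fa L).
have pA2 : perm_eq (rem Fa L) (Fb :: M) by apply: perm_to_rem.
have pB2 : perm_eq (rem Fb L) (Fa :: M).
  have h1 : perm_eq L (Fa :: Fb :: M).
    by apply: perm_trans pA _; rewrite perm_cons.
  have := rem_perm Fb h1; rewrite /= (negbTE hne) /= eqxx.
  by [].
rewrite (G_perm _ _ _ _ (_ : perm_eq _ (Fb :: M ++ newF Fa v)) (hszr _ hFa)); last first.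
  by rewrite -cat_cons perm_cat2r.
rewrite (G_perm _ _ _ _ (_ : perm_eq _ (Fa :: M ++ newF Fb v)) (hszr _ hFb)); last first.
  by rewrite -cat_cons perm_cat2r.
have -> : 6 = size (corners Fa Fb) by [].
apply: couple.
  rewrite /= corners_rel' /=; apply: all2_cat; first by apply: all2_refl; apply: face_rel_refl.
  by apply: face_rel_newF; apply: corners_rel.
move=> u hu; rewrite !deg_cat; congr (_ + _).
by apply: deg_newE hu; apply: corners_rel.
Qed.

Local Open Scope classical_set_scope.
Local Open Scope ring_scope.

Section Var.
Variable R : realFieldType.

Definition W k T n st c : R := (zT k T (ran_build_aux n c st).2)%:R.
Definition mean k T r n st : R :=
  (\sum_(c <- fut n r) W k T n st c) / (size (fut n r))%:R.

Lemma sum_fut_S (f : seq nat -> R) n r :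
  \sum_(c <- fut n r.+1) f c =
  \sum_(a <- iota 0 (2 * n).+1) \sum_(c <- fut n.+1 r) f (a :: c).
Proof.
rewrite -[fut n r.+1]/([seq i :: c | i <- iota 0 (2*n).+1, c <- fut n.+1 r]).
by rewrite big_allpairs_dep.
Qed.

Lemma sum_const_seq (T0 : Type) (s : seq T0) (c : R) :
  \sum_(x <- s) c = (size s)%:R * c.
Proof.
elim: s => [|x s IH]; first by rewrite big_nil mul0r.
by rewrite big_cons IH /= -addn1 natrD; ring.
Qed.

Lemma sum_le_const (T0 : eqType) (s : seq T0) (f : T0 -> R) c :
  (forall x, x \in s -> f x <= c) -> \sum_(x <- s) f x <= (size s)%:R * c.
Proof.
move=> h; rewrite -sum_const_seq big_seq [X in _ <= X]big_seq.
by apply: ler_sum.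
Qed.

Lemma mean_G k T r n st :
  mean k T r n st = (G k T r n st)%:R / (size (fut n r))%:R.
Proof. by rewrite /mean /G natr_sum. Qed.

Lemma Kpos n r : 0 < (size (fut n r))%:R :> R.
Proof. by rewrite ltr0n size_fut_gt0. Qed.

Lemma mean_diff k T r n st a b :
  size st.1 = (2 * n).+1 -> (a < (2 * n).+1)%N -> (b < (2 * n).+1)%N ->
  mean k T r n.+1 (ran_step n st a) - mean k T r n.+1 (ran_step n st b) <= 6.
Proof.
case: st => L E /= hs ha hb.
rewrite -hs in ha hb.
have h := first_couple k T r E hs ha hb.
rewrite !mean_G -mulrBl ler_pdivrMr ?Kpos //.
have : (G k T r n.+1 (ran_step n (L, E) a))%:R <=
       (G k T r n.+1 (ran_step n (L, E) b) + 6 * size (fut n.+1 r))%:R :> R.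
  by rewrite ler_nat.
rewrite natrD natrM; lra.
Qed.

Lemma sq_decomp (T0 : Type) (s : seq T0) (f : T0 -> R) (M : R) :
  (0 < size s)%N ->
  \sum_(x <- s) (f x - M) ^+ 2 =
  \sum_(x <- s) (f x - (\sum_(y <- s) f y) / (size s)%:R) ^+ 2 +
  (size s)%:R * ((\sum_(y <- s) f y) / (size s)%:R - M) ^+ 2.
Proof.
move=> hs; set m := (\sum_(y <- s) f y) / (size s)%:R.
have hm : \sum_(y <- s) f y = (size s)%:R * m.
  rewrite /m mulrC -mulrA mulVf ?mulr1 //.
  by rewrite pnatr_eq0 -lt0n.
have e : forall x, (f x - M) ^+ 2 = (f x - m) ^+ 2 + (2 * (m - M)) * (f x - m) + (m - M) ^+ 2.
  by move=> x; ring.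
under eq_bigr do rewrite e.
rewrite big_split big_split /= -mulr_sumr sumrB hm !sum_const_seq.
ring.
Qed.

Lemma size_step n st a : size st.1 = (2 * n).+1 -> (a < (2 * n).+1)%N ->
  size (ran_step n st a).1 = (2 * n.+1).+1.
Proof.
case: st => L E /= hs ha; rewrite step_eq /= !size_cat size_take size_drop hs ha /=.
lia.
Qed.

Lemma var_bound k T r : forall n st, size st.1 = (2 * n).+1 ->
  \sum_(c <- fut n r) (W k T n st c - mean k T r n st) ^+ 2 <=
  36 * r%:R * (size (fut n r))%:R.
Proof.
elim: r => [|r IH] n st hs.
  by rewrite /mean /= !big_cons !big_nil addr0 divr1 addr0 subrr expr0n /= mulr0 mul0r.
set M := mean k T r.+1 n st.
set K := (size (fut n.+1 r))%:R : R.
set m := fun a => mean k T r n.+1 (ran_step n st a).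
have hW : forall a c, W k T n st (a :: c) = W k T n.+1 (ran_step n st a) c by [].
have hK : 0 < K by apply: Kpos.
have hM : M = (\sum_(a <- iota 0 (2 * n).+1) m a) / ((2 * n).+1)%:R.
  rewrite /M /mean sum_fut_S size_fut_S natrM.
  have -> : \sum_(a <- iota 0 (2 * n).+1) \sum_(c <- fut n.+1 r) W k T n st (a :: c)
          = \sum_(a <- iota 0 (2 * n).+1) (m a * K).
    apply: eq_bigr => a _; rewrite /m /mean -/K.
    by rewrite -mulrA mulVf ?mulr1 // gt_eqF.
  rewrite -mulr_suml; field.
  have h1 : 0 < 1 + 2 * n%:R :> R by have := ler0n R n; lra.
  by rewrite -/K (gt_eqF hK) (gt_eqF h1).
have hdev : forall a, (a < (2 * n).+1)%N -> (m a - M) ^+ 2 <= 36.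
  move=> a ha.
  have hB : 0 < ((2 * n).+1)%:R :> R by rewrite ltr0n.
  have e : m a - M = (\sum_(b <- iota 0 (2*n).+1) (m a - m b)) / ((2*n).+1)%:R.
    rewrite sumrB sum_const_seq size_iota hM; field.
    by rewrite gt_eqF //; have := ler0n R n; lra.
  have up : m a - M <= 6.
    rewrite e ler_pdivrMr // mulrC.
    apply: le_trans (sum_le_const (c := 6) _) _; last by rewrite size_iota.
    move=> b; rewrite mem_iota /= => hb.
    by apply: mean_diff.
  have lo : - 6 <= m a - M.
    rewrite e ler_pdivlMr //.
    have h2 : \sum_(b <- iota 0 (2*n).+1) (m b - m a) <= ((2*n).+1)%:R * 6.
      apply: le_trans (sum_le_const (c := 6) _) _; last by rewrite size_iota.
      move=> b; rewrite mem_iota /= => hb.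
      by apply: mean_diff.
    have h3 : \sum_(b <- iota 0 (2*n).+1) (m a - m b) = - \sum_(b <- iota 0 (2*n).+1) (m b - m a).
      by rewrite -sumrN; apply: eq_bigr => b _; rewrite opprB.
    rewrite h3; lra.
  nra.
rewrite sum_fut_S size_fut_S natrM.
apply: (@le_trans _ _ (\sum_(a <- iota 0 (2 * n).+1) (36 * r%:R * K + K * 36))).
  rewrite big_seq [X in _ <= X]big_seq; apply: ler_sum => a; rewrite mem_iota /= => ha.
  under eq_bigr do rewrite hW.
  rewrite (sq_decomp _ _ (size_fut_gt0 n.+1 r)) -/K.
  apply: lerD; first by apply: IH; apply: size_step.
  rewrite ler_pM2l //; apply: hdev; by rewrite add0n in ha.
rewrite sum_const_seq size_iota -/K -addn1 natrD le_eqVlt; apply/orP; left; apply/eqP; ring.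
Qed.
End Var.

Lemma size_fut_mem n r c : c \in fut n r -> size c = r.
Proof.
elim: r n c => [|r IH] n c.
  by rewrite inE => /eqP ->.
rewrite -[fut n r.+1]/([seq i :: c | i <- iota 0 (2*n).+1, c <- fut n.+1 r]).
by case/allpairsPdep => [a [c' [_ hc ->]]] /=; rewrite (IH _ _ hc).
Qed.

Lemma cheb (R : realFieldType) (T0 : Type) (s : seq T0) (P : pred T0) (f : T0 -> R) L :
  (forall x, 0 <= f x) -> (forall x, P x -> L <= f x) ->
  (count P s)%:R * L <= \sum_(x <- s) f x.
Proof.
move=> h0 h1; elim: s => [|x s IH]; first by rewrite big_nil mul0r.
rewrite big_cons /= natrD mulrDl; apply: lerD => //.
case hp: (P x) => /=; first by rewrite mul1r; apply: h1.
by rewrite mul0r.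
Qed.

Lemma prob_bound (R : realType) (k t : nat) : (2 <= t)%N ->
  ran_prob R t (fun cs =>
       Num.sqrt (t%:R * ln (t%:R : R)) <= `| (ranZ k cs)%:R - ran_expect R t (ranZ k) |)
  <= 36 / ln (t%:R : R).
Proof.
move=> ht.
have hz : forall c, c \in fut 0 t -> ranZ k c = zT k t (ran_build_aux 0 c ran_init).2.
  by move=> c hc; rewrite /ranZ /zT (size_fut_mem hc).
have hmu : ran_expect R t (ranZ k) = mean R k t t 0 ran_init.
  rewrite /ran_expect /mean ran_choices_fut; congr (_ / _).
  by apply: eq_big_seq => c hc; rewrite /W hz.
have ht0 : 0 < t%:R :> R by rewrite ltr0n; lia.
have hl : 0 < ln (t%:R : R) by apply: ln_gt0; rewrite ltr1n.
set L := t%:R * ln (t%:R : R).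
have hL : 0 < L by apply: mulr_gt0.
set mu := mean R k t t 0 ran_init.
have hN := Kpos R 0 t.
rewrite /ran_prob hmu ran_choices_fut.
set N := (size (fut 0 t))%:R : R.
have hcnt : count (fun cs => Num.sqrt L <= `|(ranZ k cs)%:R - mu|) (fut 0 t) =
            count (fun cs => Num.sqrt L <= `|W R k t 0 ran_init cs - mu|) (fut 0 t).
  by apply: eq_in_count => c hc /=; rewrite /W hz.
rewrite hcnt.
have hv := @var_bound R k t t 0 ran_init erefl.
have key : (count (fun cs => Num.sqrt L <= `|W R k t 0 ran_init cs - mu|) (fut 0 t))%:R * L
           <= 36 * t%:R * N.
  apply: le_trans hv; apply: cheb => [x|x hx]; first exact: sqr_ge0.
  have h0 : 0 <= Num.sqrt L by apply: sqrtr_ge0.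
  set y := W R k t 0 ran_init x - mu.
  have e1 := sqr_sqrtr (ltW hL).
  have e2 := real_normK (num_real y).
  have h3 : 0 <= `|y| by [].
  move: hx; rewrite -/y => hx.
  rewrite -e1 -e2; nra.
rewrite ler_pdivrMr // mulrAC ler_pdivlMr //.
rewrite -(ler_pM2l ht0); move: key; rewrite /L; lra.
Qed.

Unset Implicit Arguments.

Theorem mainTheorem5 (R : realType) (k : nat) (hk : (3 <= k)%N) :
  (fun t : nat =>
     ran_prob R t (fun cs =>
       Num.sqrt (t%:R * ln (t%:R : R)) <= `| (ranZ k cs)%:R - ran_expect R t (ranZ k) |))
  @ \oo --> (0 : R^o).
Proof.
apply/cvgrPdist_le => e e0.
apply: filterS (nbhs_infty_ger (expR (36 / e) + 2)) => t ht.
rewrite sub0r normrN.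
have hE := expR_gt0 (36 / e).
have ht2 : (2 <= t)%N by rewrite -(ler_nat R); lra.
have hp0 : 0 <= ran_prob R t (fun cs =>
       Num.sqrt (t%:R * ln (t%:R : R)) <= `| (ranZ k cs)%:R - ran_expect R t (ranZ k) |).
  by rewrite /ran_prob divr_ge0.
rewrite ger0_norm //; apply: le_trans (prob_bound R k ht2) _.
have hl : 0 < ln (t%:R : R) by apply: ln_gt0; rewrite ltr1n.
have hle : 36 / e <= ln (t%:R : R).
  rewrite -[X in X <= _]expRK ler_ln ?posrE //; lra.
rewrite ler_pdivrMr //; rewrite ler_pdivrMr // in hle; lra.
Qed.
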